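(* For every $A\in\mathcal{B}$, with $g_{11},g_{12}$ as defined from $A$, $$\phi(A)=\begin{pmatrix}g_{11}&g_{12}\\ -\det(A)\,(1+t^{-1}+t)\,\overline{g_{12}} & \det(A)\,\overline{g_{11}}\end{pmatrix}.$$
   Context: For a matrix $A$ or Laurent polynomial/rational function $f$ in $t$, $\overline{A}$, $\overline{f}$ denote the result of substituting $t\mapsto t^{-1}$. Let $J_3=\begin{pmatrix}1&-t^{-1}&-t^{-1}\\-t&1&-t^{-1}\\-t&-t&1\end{pmatrix}$, $v=(t,t^2,t^3)$ (a row vector) and $\vec{1}=(1,1,1)^T$. The formal Burau group is $\mathcal{B}=\{A\in\mathrm{GL}(3,\mathbb{Z}[t,t^{-1}]) : vA=v,\ A\vec 1=\vec 1,\ \overline{A}J_3A^T=J_3\}$. For $A=(A_{ij})\in\mathcal{B}$ put, for $k=1,2$, $f_{k1}=A_{k1}(1+t+t^2)-1$, $f_{k2}=A_{k1}+A_{k2}(1+t)-1$, and $g_{kl}=f_{kl}/(t(1+t))$. Define $\phi(A)=\begin{pmatrix}g_{11}&g_{12}\\ t^{-1}g_{11}+(1+t)g_{21}& t^{-1}g_{12}+(1+t)g_{22}\end{pmatrix}$. *)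

(* Defs.v *)
(* Z[t,t^-1] is modelled inside the field of rational
   functions  F := Q-free fraction field  {fraction {poly int}} = Z(t). *)
From HB Require Import structures.
From mathcomp Require Import all_boot all_order all_algebra.
From mathcomp Require Import generic_quotient fraction.
Set Implicit Arguments. Unset Strict Implicit. Unset Printing Implicit Defensive.
Import GRing.Theory.
Local Open Scope ring_scope.
Local Open Scope quotient_scope.

Definition F : fieldType := {fraction {poly int}}.

Definition tt_ : F := tofrac ('X : {poly int}).

Definition polyF (p : {poly int}) : F := tofrac p.

Definition laurent (x : F) : Prop :=
  exists (p : {poly int}) (k : nat), x = polyF p / tt_ ^+ k.

Definition polyF_inv (p : {poly int}) : F :=
  (map_poly (fun c : int => c%:~R : F) p).[tt_^-1].

(* bar : substitution t |-> t^-1 on rational functions, computed on a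
   representative n/d (independent of the representative). *)
Definition bar (x : F) : F :=
  polyF_inv (\n_(repr x)) / polyF_inv (\d_(repr x)).

Definition barmx m n (A : 'M[F]_(m, n)) : 'M[F]_(m, n) := map_mx bar A.

Definition i0 : 'I_3 := @Ordinal 3 0 isT.
Definition i1 : 'I_3 := @Ordinal 3 1 isT.
Definition i2 : 'I_3 := @Ordinal 3 2 isT.
Definition j0 : 'I_2 := @Ordinal 2 0 isT.
Definition j1 : 'I_2 := @Ordinal 2 1 isT.

Definition J3 : 'M[F]_3 :=
  \matrix_(i < 3, j < 3)
    (if i == j then 1 else if (i < j)%N then - tt_^-1 else - tt_).

Definition vB : 'rV[F]_3 := \row_(j < 3) tt_ ^+ j.+1.
Definition one3 : 'cV[F]_3 := \col_(i < 3) 1.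

Definition in_GL3_laurent (A : 'M[F]_3) : Prop :=
  (forall i j, laurent (A i j)) /\
  exists B : 'M[F]_3, (forall i j, laurent (B i j)) /\ A *m B = 1%:M /\ B *m A = 1%:M.

Definition formal_Burau (A : 'M[F]_3) : Prop :=
  in_GL3_laurent A /\ vB *m A = vB /\ A *m one3 = one3 /\
  barmx A *m J3 *m A^T = J3.

(* k, l in {1,2} are encoded as indices 0,1 *)
Definition f_ (A : 'M[F]_3) (k : 'I_3) (l : nat) : F :=
  if l == 0%N then A k i0 * (1 + tt_ + tt_ ^+ 2) - 1
  else A k i0 + A k i1 * (1 + tt_) - 1.

Definition g_ (A : 'M[F]_3) (k : 'I_3) (l : nat) : F :=
  f_ A k l / (tt_ * (1 + tt_)).

Definition phi (A : 'M[F]_3) : 'M[F]_2 :=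
  \matrix_(i < 2, j < 2)
    (if i == j0 then g_ A i0 j
     else tt_^-1 * g_ A i0 j + (1 + tt_) * g_ A i1 j).

(* Main.v *)
Require Import Defs.
From HB Require Import structures.
From mathcomp Require Import all_boot all_order all_algebra.
From mathcomp Require Import generic_quotient fraction.
From mathcomp Require Import zify ring.
Import GRing.Theory.
Local Open Scope ring_scope.
Local Open Scope quotient_scope.

Lemma fracE (x : F) : x = tofrac (\n_(repr x)) / tofrac (\d_(repr x)).
Proof.
have dn : \d_(repr x) != 0 := denom_ratioP _.
apply: (canRL (mulfK _)); first by rewrite tofrac_eq0.
move: (repr x) dn (reprK x) => r dn <-.
unlock tofrac.
change (FracField.mul (\pi_({fraction {poly int}}) r) (\pi_({fraction {poly int}}) (Ratio \d_r 1)) = \pi_({fraction {poly int}}) (Ratio \n_r 1)).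
rewrite -FracField.pi_mul.
apply/eqmodP. rewrite /= FracField.equivfE /FracField.mulf !numden_Ratio ?oner_eq0 ?mulf_neq0 //.
  by rewrite !mulr1 mulrC.
  all: by rewrite oner_eq0.
Qed.
Lemma tt_neq0 : tt_ != 0.
Proof. by rewrite /tt_ tofrac_eq0 polyX_eq0. Qed.

Lemma tofracE (q : {poly int}) : tofrac q = (map_poly (fun c : int => c%:~R : F) q).[tt_].
Proof.
rewrite -{1}[q]coefK poly_def rmorph_sum (@horner_coef_wide _ (size q)) ?size_poly //.
apply: eq_bigr => i _; rewrite coef_map /= -mul_polyC rmorphM rmorphXn /=.
congr (_ * _).
by rewrite -{1}[q`_i]intz rmorph_int rmorph_int.
Qed.

Lemma polyF_inv_rev {p : {poly int}} : p != 0 ->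
  polyF_inv p = tt_^-1 ^+ (size p).-1 * tofrac (Poly (rev p)).
Proof.
move=> nz_p.
have nz_u_n := expf_neq0 (size p).-1 (invr_neq0 tt_neq0).
rewrite tofracE /polyF_inv.
set u := tt_^-1.
have -> : tt_ = u^-1 by rewrite /u invrK.
rewrite (@horner_coef_wide _ (size p) (map_poly _ (Poly (rev p)))); last first.
  apply: leq_trans (size_poly _ _) _; rewrite -(size_rev p); exact: size_Poly.
rewrite (@horner_coef_wide _ (size p) (map_poly _ p)) ?size_poly // mulr_sumr.
rewrite [rhs in _ = rhs](reindex_inj rev_ord_inj) /=.
apply: eq_bigr => i _; rewrite !coef_map_id0 ?mulr0z // coef_Poly nth_rev; last by move: (ltn_ord i); set b := size p; move: (nat_of_ord i) => a; lia.
have -> : (size p - (size p - i.+1).+1 = i)%N by move: (ltn_ord i); set b := size p; move: (nat_of_ord i) => a; lia.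
have e : ((size p).-1 = i + (size p - i.+1))%N by move: (ltn_ord i); set b := size p; move: (nat_of_ord i) => a; lia.
rewrite mulrCA e exprD -mulrA exprVn -exprMn (mulfV (invr_neq0 tt_neq0)) expr1n mulr1.
reflexivity.
Qed.

Lemma polyF_inv_neq0 {p : {poly int}} : p != 0 -> polyF_inv p != 0.
Proof.
move=> nz_p; rewrite (polyF_inv_rev nz_p).
apply: mulf_neq0; first exact: (expf_neq0 _ (invr_neq0 tt_neq0)).
rewrite tofrac_eq0.
apply/eqP=> /polyP/(_ 0%N); rewrite coef_Poly coef0 nth_rev ?size_poly_gt0 //.
by apply/eqP; rewrite subn1 lead_coef_eq0.
Qed.

Lemma fracP (x : F) : exists n d, d != 0 /\ x = tofrac n / tofrac d.
Proof. by exists (\n_(repr x)), (\d_(repr x)); split; [exact: denom_ratioP | exact: fracE]. Qed.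

Lemma polyF_invD p q : polyF_inv (p + q) = polyF_inv p + polyF_inv q.
Proof. by rewrite /polyF_inv rmorphD hornerD. Qed.
Lemma polyF_invB p q : polyF_inv (p - q) = polyF_inv p - polyF_inv q.
Proof. by rewrite /polyF_inv rmorphB hornerD hornerN. Qed.
Lemma polyF_invM p q : polyF_inv (p * q) = polyF_inv p * polyF_inv q.
Proof. by rewrite /polyF_inv rmorphM hornerM. Qed.
Lemma polyF_inv1 : polyF_inv 1 = 1.
Proof. by rewrite /polyF_inv rmorph1 hornerC. Qed.
Lemma polyF_invX : polyF_inv 'X = tt_^-1.
Proof. by rewrite /polyF_inv map_polyX hornerX. Qed.

Lemma bar_frac n d : d != 0 -> bar (tofrac n / tofrac d) = polyF_inv n / polyF_inv d.
Proof.
move=> dn.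
have e := fracE (tofrac n / tofrac d).
rewrite /bar.
move: e; set r := repr _ => e.
have dr : \d_r != 0 := denom_ratioP _.
have hd : tofrac d != 0 by rewrite tofrac_eq0.
have hdr : tofrac \d_r != 0 by rewrite tofrac_eq0.
have : n * \d_r = \n_r * d.
  apply/eqP; rewrite -tofrac_eq !tofracM.
  by rewrite -(eqr_div _ _ hd hdr) e eqxx.
move/(congr1 polyF_inv); rewrite !polyF_invM => h.
have pd := polyF_inv_neq0 dn. have pdr := polyF_inv_neq0 dr.
apply/eqP; rewrite (eqr_div _ _ pdr pd); apply/eqP.
by rewrite -h mulrC.
Qed.
Arguments bar_frac {n d}.

Lemma fadd {K : fieldType} {a b c d : K} : b != 0 -> d != 0 -> a/b + c/d = (a*d + c*b)/(b*d).
Proof. by move=> hb hd; field; apply/andP. Qed.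
Lemma fmul {K : fieldType} {a b c d : K} : b != 0 -> d != 0 -> a/b * (c/d) = (a*c)/(b*d).
Proof. by move=> hb hd; field; apply/andP. Qed.

Lemma barD x y : bar (x + y) = bar x + bar y.
Proof.
have [n1 [d1 [h1 ->]]] := fracP x; have [n2 [d2 [h2 ->]]] := fracP y.
have h1' : tofrac d1 != 0 by rewrite tofrac_eq0.
have h2' : tofrac d2 != 0 by rewrite tofrac_eq0.
have h12 : d1 * d2 != 0 by rewrite mulf_neq0.
rewrite (fadd h1' h2') -!rmorphM -rmorphD (bar_frac h12) (bar_frac h1) (bar_frac h2).
by rewrite polyF_invD !polyF_invM (fadd (polyF_inv_neq0 h1) (polyF_inv_neq0 h2)).
Qed.

Lemma barM x y : bar (x * y) = bar x * bar y.
Proof.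
have [n1 [d1 [h1 ->]]] := fracP x; have [n2 [d2 [h2 ->]]] := fracP y.
have h1' : tofrac d1 != 0 by rewrite tofrac_eq0.
have h2' : tofrac d2 != 0 by rewrite tofrac_eq0.
have h12 : d1 * d2 != 0 by rewrite mulf_neq0.
rewrite (fmul h1' h2') -!rmorphM (bar_frac h12) (bar_frac h1) (bar_frac h2).
by rewrite !polyF_invM (fmul (polyF_inv_neq0 h1) (polyF_inv_neq0 h2)).
Qed.

Lemma bar_tofrac n : bar (tofrac n) = polyF_inv n.
Proof.
have h : (1 : {poly int}) != 0 := oner_neq0 _.
have -> : tofrac n = tofrac n / tofrac 1 by rewrite rmorph1 divr1.
by rewrite (bar_frac h) polyF_inv1 divr1.
Qed.

Lemma bar1 : bar 1 = 1.
Proof. by rewrite -(rmorph1 (@tofrac _)) bar_tofrac polyF_inv1. Qed.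

Lemma bar0 : bar 0 = 0.
Proof. by apply: (@addrI _ (bar 0)); rewrite -barD !addr0. Qed.

Lemma barN x : bar (- x) = - bar x.
Proof. by apply: (@addrI _ (bar x)); rewrite -barD !subrr bar0. Qed.

Lemma barB x y : bar (x - y) = bar x - bar y.
Proof. by rewrite barD barN. Qed.

Lemma barV x : bar (x^-1) = (bar x)^-1.
Proof.
have [->|nz] := eqVneq x 0; first by rewrite invr0 bar0 invr0.
have h : bar x * bar x^-1 = 1 by rewrite -barM (mulfV nz) bar1.
have nb : bar x != 0.
  by apply/eqP=> e; move: h; rewrite e mul0r => /eqP; rewrite eq_sym oner_eq0.
by apply: (mulfI nb); rewrite h (mulfV nb).
Qed.

Lemma bar_tt : bar tt_ = tt_^-1.
Proof. by rewrite /tt_ bar_tofrac polyF_invX. Qed.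

Ltac canon :=
  repeat match goal with
  | |- context [ @fun_of_matrix ?R ?m ?n ?M ?i ?j ] =>
    first [
      lazymatch i with @Ordinal _ _ isT => fail | _ => idtac end;
      let v := eval vm_compute in (nat_of_ord i) in
      rewrite (_ : i = @Ordinal m v isT); last by apply: val_inj
    | lazymatch j with @Ordinal _ _ isT => fail | _ => idtac end;
      let v := eval vm_compute in (nat_of_ord j) in
      rewrite (_ : j = @Ordinal n v isT); last by apply: val_inj ]
  end.

Lemma det2 (R : comNzRingType) (M : 'M[R]_2) : \det M =
  M (@Ordinal 2 0 isT) (@Ordinal 2 0 isT) * M (@Ordinal 2 1 isT) (@Ordinal 2 1 isT)
  - M (@Ordinal 2 0 isT) (@Ordinal 2 1 isT) * M (@Ordinal 2 1 isT) (@Ordinal 2 0 isT).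
Proof.
rewrite (expand_det_row M 0) !big_ord_recl big_ord0 /cofactor !det_mx11 !mxE /=.
canon. rewrite /bump /=. ring.
Qed.

Notation e3 M i j := (M (@Ordinal 3 i isT) (@Ordinal 3 j isT)).

Lemma det3 (R : comNzRingType) (M : 'M[R]_3) : \det M =
  e3 M 0 0 * (e3 M 1 1 * e3 M 2 2 - e3 M 1 2 * e3 M 2 1)
  - e3 M 0 1 * (e3 M 1 0 * e3 M 2 2 - e3 M 1 2 * e3 M 2 0)
  + e3 M 0 2 * (e3 M 1 0 * e3 M 2 1 - e3 M 1 1 * e3 M 2 0).
Proof.
rewrite (expand_det_row M 0) !big_ord_recl big_ord0 /cofactor !det2 !mxE /=.
canon. rewrite /bump /=. 
ring.
Qed.

Lemma solve3 {K : fieldType} {t D y0 y1 y2 c0 c1 c2 : K} : t != 0 -> 1 + t != 0 ->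
  D * (y0 * 1 + (y1 * - t + (y2 * - t + 0))) = c0 ->
  D * (y0 * - t^-1 + (y1 * 1 + (y2 * - t + 0))) = c1 ->
  D * (y0 * - t^-1 + (y1 * - t^-1 + (y2 * 1 + 0))) = c2 ->
  D * y0 = - (c1 + t * c2) * t / (1 + t) /\ D * y1 = - (c0 + t * c2) / (1 + t).
Proof. by move=> ht ht1 <- <- <-; split; field; rewrite ht ht1. Qed.

Lemma key {K : fieldType} {t D y0 y1 y2 a00 a01 a02 a10 a11 a12 a20 a21 a22 : K} :
 D * (y0 * 1 + (y1 * - t + (y2 * - t + 0))) = 1 * ((-1) ^+ 0 * (a11 * a22 - a21 * a12)) + (- t^-1 * ((-1) ^+ 1 * (a01 * a22 - a21 * a02)) + (- t^-1 * ((-1) ^+ 2 * (a01 * a12 - a11 * a02)) + 0)) ->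
 D * (y0 * - t^-1 + (y1 * 1 + (y2 * - t + 0))) = 1 * ((-1) ^+ 1 * (a10 * a22 - a20 * a12)) + (- t^-1 * ((-1) ^+ 2 * (a00 * a22 - a20 * a02)) + (- t^-1 * ((-1) ^+ 3 * (a00 * a12 - a10 * a02)) + 0)) ->
 D * (y0 * - t^-1 + (y1 * - t^-1 + (y2 * 1 + 0))) = 1 * ((-1) ^+ 2 * (a10 * a21 - a20 * a11)) + (- t^-1 * ((-1) ^+ 3 * (a00 * a21 - a20 * a01)) + (- t^-1 * ((-1) ^+ 4 * (a00 * a11 - a10 * a01)) + 0)) ->
 t ^+ 1 * a00 + (t ^+ 2 * a10 + (t ^+ 3 * a20 + 0)) = t ^+ 1 ->
 t ^+ 1 * a01 + (t ^+ 2 * a11 + (t ^+ 3 * a21 + 0)) = t ^+ 2 ->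
 t ^+ 1 * a02 + (t ^+ 2 * a12 + (t ^+ 3 * a22 + 0)) = t ^+ 3 ->
 a00 * 1 + (a01 * 1 + (a02 * 1 + 0)) = 1 ->
 a10 * 1 + (a11 * 1 + (a12 * 1 + 0)) = 1 ->
 D != 0 ->
 D = a00 * (a11 * a22 - a12 * a21) - a01 * (a10 * a22 - a12 * a20) + a02 * (a10 * a21 - a11 * a20) ->
 t != 0 -> 1 + t != 0 ->
 t^-1 * ((a00 * (1 + t + t * t) - 1) / (t * (1 + t))) + (1 + t) * ((a10 * (1 + t + t * t) - 1) / (t * (1 + t)))
   = - D * (1 + t^-1 + t) * ((y0 + y1 * (1 + t^-1) - 1) / (t^-1 * (1 + t^-1)))
 /\
 t^-1 * ((a00 + a01 * (1 + t) - 1) / (t * (1 + t))) + (1 + t) * ((a10 + a11 * (1 + t) - 1) / (t * (1 + t)))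
   = D * ((y0 * (1 + t^-1 + t^-1 / t) - 1) / (t^-1 * (1 + t^-1))).
Proof.
move=> E0 E1 E2 V0 V1 V2 O0 O1 hD hDdef ht ht1.
have [hy0 hy1] := solve3 ht ht1 E0 E1 E2.
have ea02 : a02 = 1 - a00 - a01 by rewrite -{1}O0; ring.
have ea12 : a12 = 1 - a10 - a11 by rewrite -{1}O1; ring.
have ht3 : t ^+ 3 != 0 by rewrite expf_neq0.
have ea20 : a20 = (t ^+ 1 - t * a00 - t ^+ 2 * a10) / t ^+ 3.
  by rewrite -{1}V0; field.
have ea21 : a21 = (t ^+ 2 - t * a01 - t ^+ 2 * a11) / t ^+ 3.
  by rewrite -{1}V1; field.
have ea22 : a22 = (t ^+ 3 - t * a02 - t ^+ 2 * a12) / t ^+ 3.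
  by rewrite -{1}V2; field.
clear E0 E1 E2 V0 V1 V2 O0 O1.
split.
  rewrite (_ : - D * (1 + t^-1 + t) * ((y0 + y1 * (1 + t^-1) - 1) / (t^-1 * (1 + t^-1)))
     = - (1 + t^-1 + t) * ((D * y0 + D * y1 * (1 + t^-1) - D) / (t^-1 * (1 + t^-1)))); last by ring.
  rewrite hy0 hy1 hDdef ea20 ea21 ea22 ea02 ea12.
  by field; rewrite ht addrC ht1.
rewrite (_ : D * ((y0 * (1 + t^-1 + t^-1 / t) - 1) / (t^-1 * (1 + t^-1)))
   = (D * y0 * (1 + t^-1 + t^-1 / t) - D) / (t^-1 * (1 + t^-1))); last by ring.
rewrite hy0 hDdef ea20 ea21 ea22 ea02 ea12.
by field; rewrite ht addrC ht1.
Qed.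

Ltac evalb :=
  repeat match goal with
  | |- context [if ?b then _ else _] =>
     lazymatch b with true => fail | false => fail | _ => idtac end;
     let v := eval vm_compute in b in
     change b with v
  end; cbv iota.

Ltac evaln :=
  repeat match goal with
  | |- context [?x ^+ ?n] =>
     let v := eval vm_compute in n in
     tryif constr_eq n v then fail else
     change n with v
  end.

Ltac simp := rewrite ?mxE ?big_ord_recl ?big_ord0 ?mxE; try rewrite /cofactor; rewrite ?det2 ?mxE; canon; evalb; evaln.

Theorem corollary3p6 (A : 'M[F]_3) :
  formal_Burau A ->
  phi A =
  \matrix_(i < 2, j < 2)
    (if i == j0 then (if j == j0 then g_ A i0 0 else g_ A i0 1)
     else if j == j0 then - \det A * (1 + tt_^-1 + tt_) * bar (g_ A i0 1)
     else \det A * bar (g_ A i0 0)).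
Proof.
case=> [[_ [B [_ [AB _]]]] [Hv [H1 Hu]]].
have hD : \det A != 0.
  apply/eqP=> e; move: (congr1 determinant AB); rewrite det_mulmx det1 e mul0r.
  by move/eqP; rewrite eq_sym oner_eq0.
clear AB B.
have HE : (\det A) *: (barmx A *m J3) = J3 *m \adj (A^T).
  by rewrite -{2}Hu -mulmxA mul_mx_adj det_tr mul_mx_scalar.
have E k := congr1 (fun M : 'M[F]_3 => M i0 k) HE.
have E0 := E (@Ordinal 3 0 isT). have E1 := E (@Ordinal 3 1 isT). have E2 := E (@Ordinal 3 2 isT).
clear E HE.
have V k := congr1 (fun M : 'rV[F]_3 => M 0 k) Hv.
have V0 := V (@Ordinal 3 0 isT). have V1 := V (@Ordinal 3 1 isT). have V2 := V (@Ordinal 3 2 isT).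
have O k := congr1 (fun M : 'cV[F]_3 => M k 0) H1.
have O0 := O (@Ordinal 3 0 isT). have O1 := O (@Ordinal 3 1 isT).
clear V O Hv H1 Hu.
move: E0; rewrite /= /J3 /barmx /i0; simp => E0.
move: E1; rewrite /= /J3 /barmx /i0; simp => E1.
move: E2; rewrite /= /J3 /barmx /i0; simp => E2.
move: V0; rewrite /= /vB; simp => V0.
move: V1; rewrite /= /vB; simp => V1.
move: V2; rewrite /= /vB; simp => V2.
move: O0; rewrite /= /one3; simp => O0.
move: O1; rewrite /= /one3; simp => O1.
have ht := tt_neq0.
have ht1 : 1 + tt_ != 0.
  rewrite /tt_ -(rmorph1 (@tofrac _)) -rmorphD tofrac_eq0 addrC -size_poly_eq0 -polyC1 size_XaddC.
  by [].
have hDdef := det3 _ A.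
apply/matrixP => i j; rewrite !mxE.
case: i => [[|[|//]]] Hi; case: j => [[|[|//]]] Hj; rewrite (bool_irrelevance Hi isT) (bool_irrelevance Hj isT) /=; try reflexivity.
all: rewrite /g_ /f_ /= /i0 /i1 ?expr2.
all: do 6 rewrite ?barM ?barV ?barB ?barD ?bar1 ?bar_tt.
- exact: (key E0 E1 E2 V0 V1 V2 O0 O1 hD hDdef ht ht1).1.
- exact: (key E0 E1 E2 V0 V1 V2 O0 O1 hD hDdef ht ht1).2.
Qed.
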